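(* Let $(V,E,\sigma)$ be an influence graph and let $\mu : V \rightarrow \{+,-\}$ be a (partial) vertex labeling. If $X$ is an answer set of the disjunctive logic program $P_D\cup\tau((V,E,\sigma),\mu)$, then $\{i \mid \mathit{active}(i)\in X\}$ is a Minimal Inconsistent Core.
   Context: An influence graph is a triple $(V,E,\sigma)$ where $V$ is a finite set of vertices, $E\subseteq V\times V$ is a set of directed edges (an edge from $j$ to $i$ is written $j\rightarrow i$), and $\sigma : E\rightarrow\{+,-\}$ is a partial labeling of the edges; in addition, some vertices of $V$ are designated as input vertices. Signs are multiplied as numbers ($++=--=+$, $+-=-+=-$). Given a partial vertex labeling $\mu:V\rightarrow\{+,-\}$ and total labelings $\sigma':E\rightarrow\{+,-\}$, $\mu':V\rightarrow\{+,-\}$, the value $\mu'(i)$ is called consistent if there is an edge $j\rightarrow i$ in $E$ with $\mu'(i)=\mu'(j)\sigma'(j,i)$. A subset $W\subseteq V$ is a Minimal Inconsistent Core (MIC) if (1) for all total extensions $\sigma'$ of $\sigma$ and $\mu'$ of $\mu$ there is some non-input vertex $i\in W$ such that $\mu'(i)$ is inconsistent, and (2) for every proper subset $W'\subset W$ there are total extensions $\sigma'$ of $\sigma$ and $\mu'$ of $\mu$ such that $\mu'(i)$ is consistent for every non-input vertex $i\in W'$. Answer set semantics: a disjunctive logic program is a set of rules $a_1;\dots;a_l \leftarrow b_1,\dots,b_m,\mathit{not}\ c_1,\dots,\mathit{not}\ c_n$ (with $l=0$ giving an integrity constraint, whose empty head is false). Rules with (capitalized) variables stand for all their ground instances obtained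 by substituting constants occurring in the program; a built-in comparison such as $S\neq T$ keeps only instances where the substituted constants differ. A conditional literal $\mathit{opposite}(U,V):\mathit{edge}(U,V)$ in a body, for fixed $V=v$, stands for the conjunction of all atoms $\mathit{opposite}(u,v)$ such that $\mathit{edge}(u,v)$ is a fact of the program (the empty conjunction if there is none). For a set $X$ of ground atoms, the reduct $P^X$ consists of $\{a_1,\dots,a_l\}\leftarrow b_1,\dots,b_m$ for each ground rule with $\{c_1,\dots,c_n\}\cap X=\emptyset$; $X$ is an answer set of $P$ if it is a $\subseteq$-minimal model of $P^X$. Here $+$ and $-$ are constants and vertex names are constants. The instance $\tau((V,E,\sigma),\mu)$ is the set of facts: $\mathit{vertex}(i)$ for each $i\in V$; $\mathit{edge}(j,i)$ for each $j\rightarrow i$ in $E$; $\mathit{observedE}(j,i,s)$ whenever $\sigma(j,i)=s$ is defined; $\mathit{observedV}(i,s)$ whenever $\mu(i)=s$ is defined; $\mathit{input}(i)$ for each input vertex $i$. The program $P_D$ consists of the rules $\mathit{labelV}(V,S)\leftarrow \mathit{observedV}(V,S)$; $\mathit{labelE}(U,V,S)\leftarrow \mathit{observedE}(U,V,S)$; $\mathit{active}(V);\mathit{inactive}(V)\leftarrow \mathit{vertex}(V),\mathit{not}\ \mathit{input}(V)$; $\mathit{edgeMIC}(U,V)\leftarrow \mathit{edge}(U,V),\mathit{active}(V)$; $\mathit{vertexMIC}(U)\leftarrow \mathit{edgeMIC}(U,V)$; $\mathit{vertexMIC}(V)\leftarrow \mathit{active}(V)$; $\mathit{labelV}(V,+);\mathit{labelV}(V,-)\leftarrow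 \mathit{vertexMIC}(V)$; $\mathit{labelE}(U,V,+);\mathit{labelE}(U,V,-)\leftarrow \mathit{edgeMIC}(U,V)$; $\mathit{opposite}(U,V)\leftarrow \mathit{labelE}(U,V,-),\mathit{labelV}(U,S),\mathit{labelV}(V,S)$; $\mathit{opposite}(U,V)\leftarrow \mathit{labelE}(U,V,+),\mathit{labelV}(U,S),\mathit{labelV}(V,T),S\neq T$; $\mathit{bottom}\leftarrow \mathit{active}(V),\mathit{opposite}(U,V):\mathit{edge}(U,V)$; $\leftarrow \mathit{not}\ \mathit{bottom}$; $\mathit{labelV}(V,+)\leftarrow \mathit{bottom},\mathit{vertex}(V)$; $\mathit{labelV}(V,-)\leftarrow \mathit{bottom},\mathit{vertex}(V)$; $\mathit{labelE}(U,V,+)\leftarrow \mathit{bottom},\mathit{edge}(U,V)$; $\mathit{labelE}(U,V,-)\leftarrow \mathit{bottom},\mathit{edge}(U,V)$; $\mathit{labelV'}(W,V,+);\mathit{labelV'}(W,V,-)\leftarrow \mathit{active}(W),\mathit{vertexMIC}(V)$; $\mathit{labelE'}(W,U,V,+);\mathit{labelE'}(W,U,V,-)\leftarrow \mathit{active}(W),\mathit{edgeMIC}(U,V)$; $\mathit{labelV'}(W,V,S)\leftarrow \mathit{active}(W),\mathit{observedV}(V,S)$; $\mathit{labelE'}(W,U,V,S)\leftarrow \mathit{active}(W),\mathit{observedE}(U,V,S)$; $\mathit{receive'}(W,V,+)\leftarrow \mathit{labelE'}(W,U,V,S),\mathit{labelV'}(W,U,S),V\neq W$; $\mathit{receive'}(W,V,-)\leftarrow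 \mathit{labelE'}(W,U,V,S),\mathit{labelV'}(W,U,T),V\neq W,S\neq T$; $\leftarrow \mathit{labelV'}(W,V,S),\mathit{active}(V),V\neq W,\mathit{not}\ \mathit{receive'}(W,V,S)$. *)

(* Defs.v *)
From mathcomp Require Import all_boot.
From Stdlib Require Import List.
Import ListNotations.

Set Implicit Arguments.
Unset Strict Implicit.
Unset Printing Implicit Defensive.

(** Signs: [true] is [+], [false] is [-]. Product of signs. *)
Definition sign_mul (s t : bool) : bool := Bool.eqb s t.

(** * Influence graphs and Minimal Inconsistent Cores
    An influence graph is given by a finite vertex type [V], an edge relation
    [E] (E j i means j -> i), a partial edge labeling [sigma] (only its values
    on edges matter), and the set [input] of input vertices.  [mu] is a
    partial vertex labeling. *)

Section IG.
Variables (V : finType) (E : V -> V -> bool) (sigma : V -> V -> option bool)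
          (input : V -> bool) (mu : V -> option bool).

Definition ext_E (sigma' : V -> V -> bool) : Prop :=
  forall j i s, E j i -> sigma j i = Some s -> sigma' j i = s.

Definition ext_V (mu' : V -> bool) : Prop :=
  forall i s, mu i = Some s -> mu' i = s.

Definition consistent (sigma' : V -> V -> bool) (mu' : V -> bool) (i : V) : Prop :=
  exists j, E j i /\ mu' i = sign_mul (mu' j) (sigma' j i).

Definition proper_subset (W' W : V -> Prop) : Prop :=
  (forall x, W' x -> W x) /\ exists x, W x /\ ~ W' x.

Definition MIC (W : V -> Prop) : Prop :=
  (forall sigma' mu', ext_E sigma' -> ext_V mu' ->
     exists i, W i /\ ~~ input i /\ ~ consistent sigma' mu' i)
  /\
  (forall W', proper_subset W' W ->
     exists sigma' mu', ext_E sigma' /\ ext_V mu' /\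
       forall i, W' i -> ~~ input i -> consistent sigma' mu' i).
End IG.

Record rule (A : Type) := Rule {
  head : A -> Prop;   (* disjunction a_1 ; ... ; a_l   (empty = false) *)
  pos  : A -> Prop;
  neg  : A -> Prop
}.

Record prule (A : Type) := PRule { phead : A -> Prop; ppos : A -> Prop }.

Definition reduct (A : Type) (P : rule A -> Prop) (X : A -> Prop) : prule A -> Prop :=
  fun r' => exists r, P r /\ (forall c, neg r c -> ~ X c) /\
                      r' = PRule (head r) (pos r).

Definition pmodel (A : Type) (P : prule A -> Prop) (Y : A -> Prop) : Prop :=
  forall r, P r -> (forall b, ppos r b -> Y b) -> exists a, phead r a /\ Y a.

Definition answer_set (A : Type) (P : rule A -> Prop) (X : A -> Prop) : Prop :=
  pmodel (reduct P X) X /\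
  forall Y, (forall a, Y a -> X a) -> pmodel (reduct P X) Y -> forall a, X a -> Y a.

Section Program.
Variable V : finType.

(** constants of the program: vertex names and the two signs *)
Definition const := (V + bool)%type.
Definition cplus : const := inr true.
Definition cminus : const := inr false.

Inductive atom : Type :=
| vertex of const
| edge of const & const
| observedE of const & const & const
| observedV of const & const
| input of const
| labelV of const & const
| labelE of const & const & const
| active of const
| inactive of const
| edgeMIC of const & const
| vertexMIC of const
| opposite of const & const
| bottom
| labelV' of const & const & const
| labelE' of const & const & const & const
| receive' of const & const & const.

Definition R (h p n : list atom) : rule atom :=
  Rule (fun a => In a h) (fun a => In a p) (fun a => In a n).

Variables (E : V -> V -> bool) (sigma : V -> V -> option bool)
          (inp : V -> bool) (mu : V -> option bool).

Inductive tau_fact : atom -> Prop :=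
| f_vertex i : tau_fact (vertex (inl i))
| f_edge j i : E j i -> tau_fact (edge (inl j) (inl i))
| f_obsE j i s : E j i -> sigma j i = Some s ->
    tau_fact (observedE (inl j) (inl i) (inr s))
| f_obsV i s : mu i = Some s -> tau_fact (observedV (inl i) (inr s))
| f_input i : inp i -> tau_fact (input (inl i)).

(** the conditional literal opposite(U,V):edge(U,V) for fixed V = v *)
Definition cond_body (v : const) : atom -> Prop :=
  fun a => a = active v \/
           exists u, tau_fact (edge u v) /\ a = opposite u v.

(** ground instances of P_D (variables range over all constants), plus the
    facts of tau *)
Inductive ground_prog : rule atom -> Prop :=
| g_fact a : tau_fact a -> ground_prog (R [a] [] [])
| g1 v s : ground_prog (R [labelV v s] [observedV v s] [])
| g2 u v s : ground_prog (R [labelE u v s] [observedE u v s] [])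
| g3 v : ground_prog (R [active v; inactive v] [vertex v] [input v])
| g4 u v : ground_prog (R [edgeMIC u v] [edge u v; active v] [])
| g5 u v : ground_prog (R [vertexMIC u] [edgeMIC u v] [])
| g6 v : ground_prog (R [vertexMIC v] [active v] [])
| g7 v : ground_prog (R [labelV v cplus; labelV v cminus] [vertexMIC v] [])
| g8 u v : ground_prog (R [labelE u v cplus; labelE u v cminus] [edgeMIC u v] [])
| g9 u v s : ground_prog
    (R [opposite u v] [labelE u v cminus; labelV u s; labelV v s] [])
| g10 u v s t : s <> t -> ground_prog
    (R [opposite u v] [labelE u v cplus; labelV u s; labelV v t] [])
| g11 v : ground_prog (Rule (fun a => a = bottom) (cond_body v) (fun _ => False))
| g12 : ground_prog (R [] [] [bottom])
| g13 v : ground_prog (R [labelV v cplus] [bottom; vertex v] [])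
| g14 v : ground_prog (R [labelV v cminus] [bottom; vertex v] [])
| g15 u v : ground_prog (R [labelE u v cplus] [bottom; edge u v] [])
| g16 u v : ground_prog (R [labelE u v cminus] [bottom; edge u v] [])
| g17 w v : ground_prog
    (R [labelV' w v cplus; labelV' w v cminus] [active w; vertexMIC v] [])
| g18 w u v : ground_prog
    (R [labelE' w u v cplus; labelE' w u v cminus] [active w; edgeMIC u v] [])
| g19 w v s : ground_prog (R [labelV' w v s] [active w; observedV v s] [])
| g20 w u v s : ground_prog (R [labelE' w u v s] [active w; observedE u v s] [])
| g21 w u v s : v <> w -> ground_prog
    (R [receive' w v cplus] [labelE' w u v s; labelV' w u s] [])
| g22 w u v s t : v <> w -> s <> t -> ground_prog
    (R [receive' w v cminus] [labelE' w u v s; labelV' w u t] [])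
| g23 w v s : v <> w -> ground_prog
    (R [] [labelV' w v s; active v] [receive' w v s]).

End Program.

(* Main.v *)
Require Import Defs.
From mathcomp Require Import all_boot.
From Stdlib Require Import Classical ClassicalEpsilon.


Set Implicit Arguments.
Unset Strict Implicit.

Lemma support (A : Type) (P : rule A -> Prop) (X : A -> Prop) (a : A) :
  answer_set P X -> X a ->
  exists r, P r /\ (forall c, Defs.neg r c -> ~ X c) /\
    (forall b, Defs.pos r b -> X b /\ b <> a) /\ Defs.head r a /\
    (forall b, Defs.head r b -> X b -> b = a).
Proof.
  intros [Hm Hmin] Xa.
  apply NNPP; intro Hn.
  assert (HY : pmodel (reduct P X) (fun b => X b /\ b <> a)).
  { intros r' [r [Pr [Hneg ->]]] Hpos; cbn in *.
    destruct (Hm (PRule (Defs.head r) (Defs.pos r))) as [h [Hh Xh]].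
    - exists r; auto.
    - intros b Hb; exact (proj1 (Hpos b Hb)).
    - cbn in *. destruct (classic (h = a)) as [->|Hha].
      + apply NNPP; intro Hn2; apply Hn; exists r; split; [exact Pr|].
        split; [exact Hneg|]. split; [exact Hpos|]. split; [exact Hh|].
        intros b Hb Xb. apply NNPP; intro Hba. apply Hn2. exists b; auto.
      + exists h; auto. }
  destruct (Hmin _ (fun b H => proj1 H) HY a Xa) as [_ H]; auto.
Qed.

Ltac inl_ H := cbn in H; repeat (destruct H as [H|H]); try (destruct H); subst.

Definition okY (V : finType) (mu' : V -> bool) (sigma' : V -> V -> bool) (a : atom V) : Prop :=
  match a with
  | labelV (inl i) (inr b) => b = mu' i
  | labelV _ _ => False
  | labelE (inl j) (inl i) (inr b) => b = sigma' j i
  | labelE _ _ _ => False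
  | opposite (inl j) (inl i) => mu' i <> sign_mul (mu' j) (sigma' j i)
  | opposite _ _ => False
  | bottom => False
  | _ => True
  end.

Section Proof.
Variables (V : finType) (E : V -> V -> bool) (sigma : V -> V -> option bool)
          (inp : V -> bool) (mu : V -> option bool) (X : atom V -> Prop).
Hypothesis HX : answer_set (ground_prog E sigma inp mu) X.

Lemma mod r : ground_prog E sigma inp mu r -> (forall c, Defs.neg r c -> ~ X c) ->
  (forall b, Defs.pos r b -> X b) -> exists a, Defs.head r a /\ X a.
Proof.
  intros Pr Hn Hp. apply (proj1 HX (PRule (Defs.head r) (Defs.pos r))); auto.
  exists r; auto.
Qed.

Lemma Xbottom : X (@bottom V).
Proof.
  apply NNPP; intro H.
  destruct (@mod _ (g12 E sigma inp mu)) as [a [Ha _]].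
  - intros c Hc; inl_ Hc; auto.
  - intros b Hb; inl_ Hb.
  - inl_ Ha.
Qed.

Lemma Xfact a : tau_fact E sigma inp mu a -> X a.
Proof.
  intro H. destruct (@mod _ (g_fact H)) as [b [Hb Xb]].
  - intros c Hc; inl_ Hc.
  - intros c Hc; inl_ Hc.
  - inl_ Hb; auto.
Qed.

Ltac explode Hp := cbn in Hp;
  lazymatch type of Hp with
  | forall b, ?x = b \/ @?Rr b -> @?C b =>
     let H := fresh "P" in
     have H := proj1 (Hp x (or_introl erefl));
     let Hp' := fresh "Hp" in
     have Hp' : forall b, Rr b -> C b := fun b hb => Hp b (or_intror hb);
     clear Hp; explode Hp'
  | _ => idtac end.

Ltac supp H :=
  let r := fresh "r" in let Pr := fresh "Pr" in let Hn := fresh "Hn" in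
  let Hp := fresh "Hp" in let Hh := fresh "Hh" in let Ho := fresh "Ho" in
  destruct (support HX H) as [r [Pr [Hn [Hp [Hh Ho]]]]];
  destruct Pr; cbn in Hh; repeat (destruct Hh as [Hh|Hh]);
  try (match type of Hh with False => destruct Hh end);
  try discriminate; try (injection Hh; clear Hh; intros; subst); try (subst);
  try (match goal with T : tau_fact _ _ _ _ _ |- _ => solve [inversion T] end);
  try (explode Hp).

Ltac gp Hp a := exact (proj1 (Hp a ltac:(cbn; tauto))).

Lemma L_fact_like a : X a ->
  (match a with edge _ _ | observedE _ _ _ | observedV _ _ => True | _ => False end) ->
  tau_fact E sigma inp mu a.
Proof.
  intros Xa K. supp Xa; try (destruct K); subst; auto.
Qed.


Lemma L_edge u v : X (edge u v) -> tau_fact E sigma inp mu (edge u v).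
Proof. intro H; apply L_fact_like; auto. Qed.
Lemma L_obsV v s : X (observedV v s) -> tau_fact E sigma inp mu (observedV v s).
Proof. intro H; apply L_fact_like; auto. Qed.
Lemma L_obsE u v s : X (observedE u v s) -> tau_fact E sigma inp mu (observedE u v s).
Proof. intro H; apply L_fact_like; auto. Qed.

Lemma L_vertex v : X (vertex v) -> exists i, v = inl i.
Proof.
  intro H. supp H. match goal with T : tau_fact _ _ _ _ _ |- _ => inversion T end; eauto.
Qed.

Ltac use L :=
  match goal with P : X _ |- _ => let T := fresh "T" in have T := L _ _ _ P end.

Lemma L_active v : X (active v) -> exists i, v = inl i /\ inp i = false.
Proof.
  intro H. supp H.
  match goal with P : X (vertex _) |- _ => destruct (L_vertex P) as [i ->] end.
  exists i; split; auto.
  destruct (inp i) eqn:Ei; auto. exfalso.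
  apply (Hn (input (inl i))); [cbn; auto|]. apply Xfact. constructor; auto.
Qed.

Lemma L_edgeMIC u v : X (edgeMIC u v) -> tau_fact E sigma inp mu (edge u v).
Proof.
  intro H. supp H. match goal with P : X (edge _ _) |- _ => apply (L_edge P) end.
Qed.

Lemma L_vertexMIC v : X (vertexMIC v) -> exists i, v = inl i.
Proof.
  intro H. supp H.
  - match goal with P : X (edgeMIC _ _) |- _ => have T := L_edgeMIC P end.
    inversion T; eauto.
  - match goal with P : X (active _) |- _ => destruct (L_active P) as [i [-> _]] end.
    eauto.
Qed.

Lemma L_labelV'sign w v s : X (labelV' w v s) -> exists b, s = inr b.
Proof.
  intro H. supp H; try (eexists; reflexivity).
  match goal with P : X (observedV _ _) |- _ => have T := L_obsV P end.
  inversion T; eauto.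
Qed.

Lemma L_labelE'sign w u v s : X (labelE' w u v s) ->
  (exists b, s = inr b) /\ tau_fact E sigma inp mu (edge u v).
Proof.
  intro H. supp H.
  1,2: split; [eexists; reflexivity| match goal with P : X (edgeMIC _ _) |- _ => apply (L_edgeMIC P) end].
  match goal with P : X (observedE _ _ _) |- _ => have T := L_obsE P end.
  inversion T; subst; split; eauto. constructor; auto.
Qed.

Ltac hoclash :=
  match goal with Ho : forall b, Defs.head _ b -> X b -> b = _, P : X ?a |- _ =>
    let e := fresh in
    have e := Ho a ltac:(cbn; unfold cplus, cminus; tauto) P;
    unfold cplus, cminus in e; discriminate e end.

Lemma L_labelV'uniq w v b b' :
  X (labelV' w v (inr b)) -> X (labelV' w v (inr b')) -> b = b'.
Proof.
  intros H1 H2. destruct b, b'; try reflexivity; exfalso.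
  all: supp H1; try hoclash.
  all: supp H2; try hoclash.
  all: repeat match goal with P : X (observedV _ _) |- _ =>
                have T := L_obsV P; clear P; inversion T; subst; clear T end.
  all: congruence.
Qed.

Lemma L_labelE'uniq w u v b b' :
  X (labelE' w u v (inr b)) -> X (labelE' w u v (inr b')) -> b = b'.
Proof.
  intros H1 H2. destruct b, b'; try reflexivity; exfalso.
  all: supp H1; try hoclash.
  all: supp H2; try hoclash.
  all: repeat match goal with P : X (observedE _ _ _) |- _ =>
                have T := L_obsE P; clear P; inversion T; subst; clear T end.
  all: congruence.
Qed.

Lemma L_receive w v s : X (receive' w v s) -> v <> w /\
  exists u s1 s2, X (labelE' w u v s1) /\ X (labelV' w u s2) /\
    ((s = cplus V /\ s1 = s2) \/ (s = cminus V /\ s1 <> s2)).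
Proof.
  intro H. supp H.
  - split; auto. do 3 eexists; split; [eassumption|split; [eassumption|]]. left; auto.
  - split; auto. do 3 eexists; split; [eassumption|split; [eassumption|]]. right; auto.
Qed.


Ltac fire G :=
  let a := fresh "a" in let Ha := fresh "Ha" in let Xa := fresh "Xa" in
  destruct (mod G) as [a [Ha Xa]];
  [ let c := fresh in let Hc := fresh in intros c Hc; inl_ Hc; auto
  | let c := fresh in let Hc := fresh in intros c Hc; inl_ Hc; auto
  | inl_ Ha ].

Lemma g19X w v s : X (active w) -> X (observedV v s) -> X (labelV' w v s).
Proof. intros. fire (g19 E sigma inp mu w v s); auto. Qed.

Lemma g20X w u v s : X (active w) -> X (observedE u v s) -> X (labelE' w u v s).
Proof. intros. fire (g20 E sigma inp mu w u v s); auto. Qed.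

Lemma XlabelV i b : X (labelV (inl i) (inr b)).
Proof.
  have Xv : X (vertex (inl i)) by apply Xfact; constructor.
  have Xb := Xbottom.
  destruct b; [fire (g13 E sigma inp mu (inl i)) | fire (g14 E sigma inp mu (inl i))]; auto.
Qed.

Lemma XlabelE j i b : E j i -> X (labelE (inl j) (inl i) (inr b)).
Proof.
  intro Eji.
  have Xv : X (edge (inl j) (inl i)) by apply Xfact; constructor.
  have Xb := Xbottom.
  destruct b; [fire (g15 E sigma inp mu (inl j) (inl i)) | fire (g16 E sigma inp mu (inl j) (inl i))]; auto.
Qed.

Lemma cond2 W' : proper_subset W' (fun i => X (active (inl i))) ->
  exists sigma' mu', ext_E E sigma sigma' /\ ext_V mu mu' /\
    forall i, W' i -> ~~ inp i -> consistent E sigma' mu' i.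
Proof.
  intros [sub [x [Wx nW'x]]].
  pose mu' := fun i => if excluded_middle_informative (X (labelV' (inl x) (inl i) (cplus V)))
                       then true else odflt false (mu i).
  pose sg' := fun j i => if excluded_middle_informative (X (labelE' (inl x) (inl j) (inl i) (cplus V)))
                       then true else odflt false (sigma j i).
  have Hmu : forall i b, X (labelV' (inl x) (inl i) (inr b)) -> mu' i = b.
  { intros i b H. rewrite /mu'. destruct (excluded_middle_informative _) as [h|h].
    - exact (L_labelV'uniq h H).
    - destruct b; [contradiction|]. destruct (mu i) as [b0|] eqn:M; cbn; auto.
      have H2 : X (labelV' (inl x) (inl i) (inr b0)).
      { apply g19X; auto. apply Xfact; constructor; auto. }
      exact (L_labelV'uniq H2 H). }
  have Hsg : forall j i b, X (labelE' (inl x) (inl j) (inl i) (inr b)) -> sg' j i = b.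
  { intros j i b H. rewrite /sg'. destruct (excluded_middle_informative _) as [h|h].
    - exact (L_labelE'uniq h H).
    - destruct b; [contradiction|]. destruct (sigma j i) as [b0|] eqn:M; cbn; auto.
      have [_ T] := L_labelE'sign H. inversion T; subst.
      have H2 : X (labelE' (inl x) (inl j) (inl i) (inr b0)).
      { apply g20X; auto. apply Xfact; constructor; auto. }
      exact (L_labelE'uniq H2 H). }
  exists sg', mu'. split; [|split].
  - intros j i b Eji Hs. apply Hsg. apply g20X; auto. apply Xfact; constructor; auto.
  - intros i b Hm. apply Hmu. apply g19X; auto. apply Xfact; constructor; auto.
  - intros i W'i ni. have Xi := sub i W'i.
    have nix : inl i <> inl x :> const V.
    { intro e; injection e; intros ->; contradiction. }
    have XvM : X (vertexMIC (inl i)) by fire (g6 E sigma inp mu (inl i)); auto.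
    have [cb Xc] : exists cb, X (labelV' (inl x) (inl i) (inr cb)).
    { destruct (mod (g17 E sigma inp mu (inl x) (inl i))) as [c [Hc Xc]].
      { intros c Hc; inl_ Hc. }
      { intros c Hc; inl_ Hc; auto. }
      inl_ Hc; eexists; eassumption. }
    have Hrc : X (receive' (inl x) (inl i) (inr cb)).
    { apply NNPP; intro nr.
      destruct (mod (g23 E sigma inp mu (inr cb) nix)) as [a [Ha _]].
      - intros c' Hc'; inl_ Hc'; auto.
      - intros c' Hc'; inl_ Hc'; auto.
      - inl_ Ha. }
    destruct (L_receive Hrc) as [_ [u [s1 [s2 [X1 [X2 Hcase]]]]]].
    destruct (L_labelE'sign X1) as [[b1 ->] T]. inversion T; subst.
    destruct (L_labelV'sign X2) as [b2 ->].
    exists j; split; auto.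
    have e1 := Hsg _ _ _ X1. have e2 := Hmu _ _ X2.
    unfold cplus, cminus in *.
    have e5 := Hmu _ _ Xc.
    destruct Hcase as [[e3 e4]|[e3 e4]]; injection e3; intros ->.
    + injection e4; intros <-. rewrite e5 e1 e2. by destruct b1.
    + rewrite e5 e1 e2. destruct b1, b2; cbn; congruence.
Qed.

Ltac explode2 Hp := cbn in Hp;
  lazymatch type of Hp with
  | forall b, ?x = b \/ @?Rr b -> @?C b =>
     let H := fresh "Q" in
     have H := Hp x (or_introl erefl);
     let Hp' := fresh "Hp" in
     have Hp' : forall b, Rr b -> C b := fun b hb => Hp b (or_intror hb);
     clear Hp; explode2 Hp'
  | _ => idtac end.

Lemma cond1 sigma' mu' : ext_E E sigma sigma' -> ext_V mu mu' ->
  exists i, X (active (inl i)) /\ ~~ inp i /\ ~ consistent E sigma' mu' i.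
Proof.
  intros Hs Hm. apply NNPP; intro Hc.
  have Hcons : forall i, X (active (inl i)) -> consistent E sigma' mu' i.
  { intros i Xi. apply NNPP; intro nc. apply Hc. exists i; split; auto.
    destruct (L_active Xi) as [i' [e Hi]]. injection e; intros <-. rewrite Hi; auto. }
  pose Y := fun a => X a /\ okY mu' sigma' a.
  have HY : pmodel (reduct (ground_prog E sigma inp mu) X) Y.
  { intros r' [r [Pr [Hneg ->]]] Hpos. cbn in Hpos |- *.
    destruct (mod Pr Hneg (fun b hb => proj1 (Hpos b hb))) as [a [Ha Xa]].
    unfold Y in Hpos.
    destruct Pr;
    try solve [eexists; split; [eassumption|split; [eassumption|
         cbn in Ha; repeat (destruct Ha as [Ha|Ha]); try (match type of Ha with False => destruct Ha end);
         subst; try (match goal with T : tau_fact _ _ _ _ _ |- _ => inversion T end); cbn; exact I]]].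
    all: cbn in Ha; try (explode2 Hpos);
    repeat match goal with H : _ /\ okY _ _ _ |- _ => destruct H end;
    unfold cplus, cminus in *;
    repeat (destruct Ha as [Ha|Ha]); try (match type of Ha with False => destruct Ha end);
    subst.
    all: try (match goal with H : okY _ _ (bottom _) |- _ => destruct H end).
    - match goal with H : X (observedV _ _) |- _ => have T := L_obsV H; inversion T; subst end.
      exists (labelV (inl i) (inr s0)); split; [cbn; auto|split; [auto|cbn; symmetry; apply Hm; auto]].
    - match goal with H : X (observedE _ _ _) |- _ => have T := L_obsE H; inversion T; subst end.
      exists (labelE (inl j) (inl i) (inr s0)); split; [cbn; auto|split; [auto|cbn; symmetry; apply Hs; auto]].
    1,2: match goal with H : X (vertexMIC _) |- _ => destruct (L_vertexMIC H) as [i ->] end;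
      exists (labelV (inl i) (inr (mu' i))); split;
      [destruct (mu' i); cbn; auto | split; [apply XlabelV| cbn; reflexivity]].
    1,2: match goal with H : X (edgeMIC _ _) |- _ => have T := L_edgeMIC H; inversion T; subst end;
      exists (labelE (inl j) (inl i) (inr (sigma' j i))); split;
      [destruct (sigma' j i); cbn; auto | split; [apply XlabelE; auto| cbn; reflexivity]].
    1,2: destruct u as [j|?]; try (match goal with H : okY _ _ (labelE (inr _) _ _) |- _ => destruct H end);
      destruct v as [i|?]; try (match goal with H : okY _ _ (labelE _ (inr _) _) |- _ => destruct H end);
      repeat match goal with c : const _ |- _ => destruct c as [?|?];
        try (match goal with H : okY _ _ (labelV _ (inl _)) |- _ => destruct H end) end;
      cbn in *;
      exists (opposite (inl j) (inl i)); (split; [cbn; auto|split; [assumption|cbn]]);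
      repeat match goal with H : ?b = ?f _ |- _ => is_var f; rewrite <- H in *; clear H end;
      repeat match goal with H : ?b = ?f _ _ |- _ => is_var f; rewrite <- H in *; clear H end.
    + by destruct b.
    + destruct b, b0; cbn; congruence.
    - exfalso.
      destruct (Hpos (active v) (or_introl erefl)) as [Xv _].
      destruct (L_active Xv) as [i [-> _]].
      destruct (Hcons i Xv) as [j [Eji Hj]].
      destruct (Hpos (opposite (inl j) (inl i)) (or_intror (ex_intro _ (inl j) (conj (f_edge sigma inp mu Eji) erefl)))) as [_ Ok].
      exact (Ok Hj). }
  have Hb := proj2 HX Y (fun a h => proj1 h) HY _ Xbottom.
  exact (proj2 Hb).
Qed.
End Proof.

Theorem theorem3 (V : finType) (E : V -> V -> bool)
  (sigma : V -> V -> option bool) (inp : V -> bool) (mu : V -> option bool)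
  (X : atom V -> Prop) :
  answer_set (ground_prog E sigma inp mu) X ->
  MIC E sigma inp mu (fun i => X (active (inl i))).
Proof.
  intro HX. split.
  - intros sigma' mu' Hs Hm. exact (cond1 HX Hs Hm).
  - intros W' HW'. exact (cond2 HX HW').
Qed.
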